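(* Let $\mathcal{X}$ be a finite set, $\pi$ a probability mass function on $\mathcal{X}$ with full support, and let a group $\mathcal{G}$ act on $\mathcal{X}$. Let $G$, $M$, $B$ be the Gibbs, Metropolis–Hastings and Barker orbit kernels for this same action. Then $GM=MG=BG=GB=G$.
   Context: With $\mathcal{O}(x)$ the orbit of $x$ and $\pi(A)=\sum_{z\in A}\pi(z)$: $G(x,y)=\pi(y)/\pi(\mathcal{O}(x))$ for $y\in\mathcal{O}(x)$ and $0$ otherwise; $M(x,y)=\frac{1}{|\mathcal{O}(x)|-1}\min\{1,\pi(y)/\pi(x)\}$ for $y\in\mathcal{O}(x)\setminus\{x\}$, $0$ for $y\notin\mathcal{O}(x)$, and $M(x,x)=1-\sum_{y\ne x}M(x,y)$ (so $M(x,x)=1$ for singleton orbits); $B$ is defined like $M$ with acceptance $\pi(y)/(\pi(x)+\pi(y))$. *)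

(* Defs.v *)
From mathcomp Require Import all_boot all_order all_algebra.
From mathcomp Require Import boolp.
Set Implicit Arguments. Unset Strict Implicit. Unset Printing Implicit Defensive.
Import Order.TTheory GRing.Theory Num.Theory.
Local Open Scope ring_scope.

Section OrbitKernels.
Variables (R : realFieldType) (X : finType) (Gt : Type) (act : Gt -> X -> X)
  (pi : X -> R).

Definition orbit (x : X) : {set X} := [set y | `[< exists g : Gt, act g x = y >]].

Definition piS (A : {set X}) : R := \sum_(z in A) pi z.

Definition gibbs (x y : X) : R :=
  if y \in orbit x then pi y / piS (orbit x) else 0.

(* Generic "propose uniformly in the orbit, accept with probability acc x y" kernel *)
Definition orbit_off (acc : X -> X -> R) (x y : X) : R :=
  if (y \in orbit x) && (y != x)
  then (#|orbit x|%:R - 1)^-1 * acc x y else 0.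

Definition orbit_kernel (acc : X -> X -> R) (x y : X) : R :=
  if y == x then 1 - \sum_(z | z != x) orbit_off acc x z
  else orbit_off acc x y.

Definition mh : X -> X -> R :=
  orbit_kernel (fun x y => Num.min 1 (pi y / pi x)).

Definition barker : X -> X -> R :=
  orbit_kernel (fun x y => pi y / (pi x + pi y)).

End OrbitKernels.

Definition kmul (R : realFieldType) (X : finType) (K L : X -> X -> R) : X -> X -> R :=
  fun x y => \sum_(z : X) K x z * L z y.

(* Main.v *)
Require Import Defs.
From mathcomp Require Import all_boot all_order all_algebra.
From mathcomp Require Import boolp.
Import Order.TTheory GRing.Theory Num.Theory.
Local Open Scope ring_scope.

Lemma row_sum (R : realFieldType) (X : finType) (Gt : Type) (act : Gt -> X -> X)
  (acc : X -> X -> R) x : \sum_y orbit_kernel act acc x y = 1.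
Proof.
rewrite (bigD1 x) //= /orbit_kernel eqxx.
rewrite (eq_bigr (fun y => orbit_off act acc x y)); first by rewrite subrK.
by move=> y /negbTE ->.
Qed.

Lemma ker_out (R : realFieldType) (X : finType) (Gt : Type) (act : Gt -> X -> X)
  (acc : X -> X -> R) (Orefl : forall x, x \in Defs.orbit act x) x y :
  y \notin Defs.orbit act x -> orbit_kernel act acc x y = 0.
Proof.
move=> Hy; have neq : y != x by apply: contraNneq Hy => ->.
by rewrite /orbit_kernel (negbTE neq) /orbit_off (negbTE Hy).
Qed.

Lemma KG (R : realFieldType) (X : finType) (Gt : Type) (act : Gt -> X -> X)
  (pi : X -> R) (acc : X -> X -> R) (Orefl : forall x, x \in Defs.orbit act x)
  (Oeq : forall x y, y \in Defs.orbit act x -> Defs.orbit act y = Defs.orbit act x) x y :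
  kmul (orbit_kernel act acc) (gibbs act pi) x y = gibbs act pi x y.
Proof.
rewrite /kmul (eq_bigr (fun z => orbit_kernel act acc x z * gibbs act pi x y)).
  by rewrite -big_distrl /= row_sum mul1r.
move=> z _; case: (boolP (z \in Defs.orbit act x)) => Hz.
  by rewrite /gibbs (Oeq _ _ Hz).
by rewrite ker_out // !mul0r.
Qed.

Lemma stat (R : realFieldType) (X : finType) (Gt : Type) (act : Gt -> X -> X)
  (pi : X -> R) (acc : X -> X -> R) (Orefl : forall x, x \in Defs.orbit act x)
  (Oeq : forall x y, y \in Defs.orbit act x -> Defs.orbit act y = Defs.orbit act x)
  (sym : forall x y, pi x * acc x y = pi y * acc y x) y :
  \sum_z pi z * orbit_kernel act acc z y = pi y.
Proof.
have Osym : forall a b, b \in Defs.orbit act a -> a \in Defs.orbit act b.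
  by move=> a b H; rewrite (Oeq _ _ H).
rewrite (bigD1 y) //= {1}/orbit_kernel eqxx.
rewrite [\sum_(z | z != y) pi z * _](eq_bigr (fun z => pi y * orbit_off act acc y z)).
  by rewrite -big_distrr /= -mulrDr subrK mulr1.
move=> z Hz; rewrite /orbit_kernel eq_sym (negbTE Hz) /orbit_off eq_sym Hz /=.
case: (boolP (y \in Defs.orbit act z)) => H.
  rewrite (Osym _ _ H) /= (Oeq _ _ H).
  by rewrite mulrCA sym mulrCA.
have H' : z \notin Defs.orbit act y by apply: contra H; apply: Osym.
by rewrite (negbTE H') !mulr0.
Qed.

Lemma GK (R : realFieldType) (X : finType) (Gt : Type) (act : Gt -> X -> X)
  (pi : X -> R) (acc : X -> X -> R) (Orefl : forall x, x \in Defs.orbit act x)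
  (Oeq : forall x y, y \in Defs.orbit act x -> Defs.orbit act y = Defs.orbit act x)
  (sym : forall x y, pi x * acc x y = pi y * acc y x) x y :
  kmul (gibbs act pi) (orbit_kernel act acc) x y = gibbs act pi x y.
Proof.
have Osym : forall a b, b \in Defs.orbit act a -> a \in Defs.orbit act b.
  by move=> a b H; rewrite (Oeq _ _ H).
case: (boolP (y \in Defs.orbit act x)) => Hy.
  rewrite /kmul (eq_bigr (fun z => pi z * orbit_kernel act acc z y / piS pi (Defs.orbit act x))).
    by rewrite -big_distrl /= stat // /gibbs Hy.
  move=> z _; rewrite /gibbs; case: (boolP (z \in Defs.orbit act x)) => Hz.
    by rewrite mulrAC.
  rewrite ker_out //; first by rewrite !mulr0 mul0r.
  apply: contra Hz => Hz; rewrite -(Oeq _ _ Hy); exact: Osym.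
rewrite /kmul big1 /gibbs ?(negbTE Hy) // => z _.
case: (boolP (z \in Defs.orbit act x)) => Hz; last by rewrite mul0r.
rewrite ker_out ?mulr0 //; by rewrite (Oeq _ _ Hz).
Qed.

Theorem lemma3p4 (R : realFieldType) (X : finType)
  (Gt : Type) (mul : Gt -> Gt -> Gt) (one : Gt) (inv : Gt -> Gt)
  (mulA : forall a b c, mul a (mul b c) = mul (mul a b) c)
  (mul1g : forall a, mul one a = a)
  (mulVg : forall a, mul (inv a) a = one)
  (act : Gt -> X -> X)
  (act1 : forall x, act one x = x)
  (actM : forall g h x, act (mul g h) x = act g (act h x))
  (pi : X -> R)
  (pi_pos : forall x, 0 < pi x)
  (pi_sum : \sum_(x : X) pi x = 1) :
  let G := gibbs act pi in
  let M := mh act pi in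
  let B := barker act pi in
  (forall x y, kmul G M x y = G x y) /\
  (forall x y, kmul M G x y = G x y) /\
  (forall x y, kmul B G x y = G x y) /\
  (forall x y, kmul G B x y = G x y).
Proof.
have Orefl : forall x, x \in Defs.orbit act x.
  by move=> x; rewrite /Defs.orbit inE; apply/asboolP; exists one.
have Oeq : forall x y, y \in Defs.orbit act x -> Defs.orbit act y = Defs.orbit act x.
  move=> x y; rewrite /Defs.orbit inE => /asboolP [g Hg]; apply/setP => z; rewrite !inE.
  apply/asboolP/asboolP => [[h Hh]|[h Hh]].
    by exists (mul h g); rewrite actM Hg.
  by exists (mul h (inv g)); rewrite actM -Hg -(actM (inv g)) mulVg act1.
have symM : forall x y, pi x * Num.min 1 (pi y / pi x) = pi y * Num.min 1 (pi x / pi y).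
  move=> x y; rewrite !minr_pMr ?ltW // !mulr1 ![pi _ * (_ / _)]mulrC !divfK ?gt_eqF //.
  exact: minC.
have symB : forall x y, pi x * (pi y / (pi x + pi y)) = pi y * (pi x / (pi y + pi x)).
  by move=> x y; rewrite addrC !mulrA [pi x * _]mulrC.
move=> G M B; split; first exact: GK.
split; first exact: KG.
split; first exact: KG.
exact: GK.
Qed.
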